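(* Let $0\le\alpha<\beta$ with $\alpha+\beta<2$, and set $c_1=\alpha+\beta$, $c_2=\beta-\alpha$. Define $\tilde\Phi:\mathbb{R}^2\to\mathbb{R}$ by \[ \tilde\Phi(x,y)=\tfrac14c_1x^2+\tfrac14c_2y^2-\tfrac12\log\cosh\!\Big(\tfrac{c_1x+c_2y}{2}\Big)-\tfrac12\log\cosh\!\Big(\tfrac{c_1x-c_2y}{2}\Big). \] Then $(0,0)$ is the unique critical point of $\tilde\Phi$, and for every $r>0$, $\inf_{(x,y)\notin B(0,r)}\tilde\Phi(x,y)>0$, where $B(0,r)$ is the open Euclidean ball of radius $r$ about the origin. *)

(* Defs.v *)
From Stdlib Require Import Reals.
Open Scope R_scope.

Definition Phi (alpha beta x y : R) : R :=
  let c1 := alpha + beta in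
  let c2 := beta - alpha in
  / 4 * c1 * x ^ 2 + / 4 * c2 * y ^ 2
  - / 2 * ln (cosh ((c1 * x + c2 * y) / 2))
  - / 2 * ln (cosh ((c1 * x - c2 * y) / 2)).

(* (x,y) is a critical point: both partial derivatives exist and vanish
   (Phi is smooth, so this is the usual notion). *)
Definition critical_point (f : R -> R -> R) (x y : R) : Prop :=
  derivable_pt_lim (fun t => f t y) x 0 /\ derivable_pt_lim (fun t => f x t) y 0.

(* Main.v *)
Require Import Defs.
From Stdlib Require Import Reals.
From Stdlib Require Import Lra Psatz.
From Coquelicot Require Import Coquelicot.
Open Scope R_scope.

Lemma cosh_gt0 t : 0 < cosh t.
Proof. unfold cosh. pose proof (exp_pos t). pose proof (exp_pos (-t)). lra. Qed.

Lemma sinh_ge0 t : 0 <= t -> 0 <= sinh t.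
Proof. intros H. destruct H as [H|H]. rewrite <- sinh_0. left; now apply sinh_lt.
subst; rewrite sinh_0; lra. Qed.

Lemma sinh_le t : 0 <= t -> sinh t <= t * cosh t.
Proof.
  intros [H|H]; [|subst; rewrite sinh_0; lra].
  destruct (MVT_cor2 (fun t => t * cosh t - sinh t) (fun t => t * sinh t) 0 t H)
    as [c [Hc1 Hc2]].
  { intros c _. apply is_derive_Reals. unfold cosh, sinh. auto_derive; auto. cbv beta. field. }
  rewrite sinh_0 in Hc1.
  assert (0 <= c * sinh c) by (apply Rmult_le_pos; [lra| apply sinh_ge0; lra]).
  nra.
Qed.

Lemma cosh_neg' t : cosh (- t) = cosh t.
Proof. unfold cosh. rewrite Ropp_involutive. lra. Qed.
Lemma sinh_neg' t : sinh (- t) = - sinh t.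
Proof. unfold sinh. rewrite Ropp_involutive. lra. Qed.

Lemma tanh_abs s : Rabs (sinh s / cosh s) <= Rabs s.
Proof.
  assert (K : forall t, 0 <= t -> 0 <= sinh t / cosh t <= t).
  { intros t Ht. pose proof (cosh_gt0 t). pose proof (sinh_ge0 t Ht).
    pose proof (sinh_le t Ht). split.
    - apply Rdiv_le_0_compat; lra.
    - apply Rmult_le_reg_r with (cosh t); auto. field_simplify; lra. }
  destruct (Rle_or_lt 0 s) as [Hs|Hs].
  - specialize (K s Hs). rewrite !Rabs_pos_eq; lra.
  - specialize (K (-s) ltac:(lra)). rewrite cosh_neg', sinh_neg' in K.
    rewrite (Rabs_left s) by lra.
    replace (- sinh s / cosh s) with (- (sinh s / cosh s)) in K by (field; apply Rgt_not_eq, cosh_gt0).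
    rewrite Rabs_left1; lra.
Qed.

Lemma lncosh_le t : ln (cosh t) <= t ^ 2 / 2.
Proof.
  assert (K : forall t, 0 < t -> ln (cosh t) <= t ^ 2 / 2).
  { intros s Hs.
    destruct (MVT_cor2 (fun t => t ^ 2 / 2 - ln (cosh t)) (fun t => t - sinh t / cosh t) 0 s Hs)
      as [c [Hc1 Hc2]].
    { intros c _. apply is_derive_Reals. unfold cosh, sinh. auto_derive.
      - pose proof (exp_pos c). pose proof (exp_pos (-c)). lra.
      - pose proof (exp_pos c). pose proof (exp_pos (-c)). cbv beta. field. lra. }
    rewrite cosh_0, ln_1 in Hc1.
    pose proof (tanh_abs c). rewrite (Rabs_pos_eq c) in H by lra.
    pose proof (Rle_abs (sinh c / cosh c)). nra. }
  destruct (Rtotal_order t 0) as [H|[H|H]].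
  - rewrite <- cosh_neg'. specialize (K (-t) ltac:(lra)). nra.
  - subst. rewrite cosh_0, ln_1. lra.
  - auto.
Qed.

Definition T s := sinh s / cosh s.

Ltac pos_side := repeat split; try apply Rmult_lt_0_compat;
  try (apply Rplus_lt_0_compat; apply exp_pos); lra.
Ltac nz_side := repeat split; apply Rgt_not_eq;
  try apply Rmult_lt_0_compat; try (apply Rplus_lt_0_compat; apply exp_pos); lra.

Lemma derx a b x y : derivable_pt_lim (fun t => Phi a b t y) x
  ((a+b)/4 * (2*x - T (((a+b)*x + (b-a)*y)/2) - T (((a+b)*x - (b-a)*y)/2))).
Proof.
  apply is_derive_Reals. unfold Phi, T, cosh, sinh, Rdiv, Rminus. auto_derive.
  - pos_side.
  - field; nz_side.
Qed.

Lemma dery a b x y : derivable_pt_lim (fun t => Phi a b x t) y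
  ((b-a)/4 * (2*y - T (((a+b)*x + (b-a)*y)/2) + T (((a+b)*x - (b-a)*y)/2))).
Proof.
  apply is_derive_Reals. unfold Phi, T, cosh, sinh, Rdiv, Rminus. auto_derive.
  - pos_side.
  - field; nz_side.
Qed.

Theorem mainTheorem6 (alpha beta : R)
  (h0 : 0 <= alpha) (hab : alpha < beta) (h2 : alpha + beta < 2) :
  (forall x y : R, critical_point (Phi alpha beta) x y <-> (x = 0 /\ y = 0)) /\
  (forall r : R, 0 < r ->
     exists m : R, 0 < m /\
       forall x y : R, r <= sqrt (x ^ 2 + y ^ 2) -> m <= Phi alpha beta x y).
Proof.
  split.
  - intros x y. split.
    + intros [H1 H2].
      pose proof (uniqueness_limite _ _ _ _ H1 (derx alpha beta x y)) as E1.
      pose proof (uniqueness_limite _ _ _ _ H2 (dery alpha beta x y)) as E2.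
      set (u := ((alpha + beta) * x + (beta - alpha) * y) / 2) in *.
      set (v := ((alpha + beta) * x - (beta - alpha) * y) / 2) in *.
      assert (F1 : 2 * x - T u - T v = 0).
      { symmetry in E1. apply Rmult_integral in E1. destruct E1; [lra|auto]. }
      assert (F2 : 2 * y - T u + T v = 0).
      { symmetry in E2. apply Rmult_integral in E2. destruct E2; [lra|auto]. }
      assert (Ea : T u = x + y) by lra.
      assert (Eb : T v = x - y) by lra.
      pose proof (tanh_abs u) as Tu. pose proof (tanh_abs v) as Tv.
      fold (T u) in Tu. fold (T v) in Tv. rewrite Ea in Tu. rewrite Eb in Tv.
      assert (Hu : u = (beta * (x+y) + alpha * (x-y))/2) by (unfold u; field).
      assert (Hv : v = (alpha * (x+y) + beta * (x-y))/2) by (unfold v; field).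
      rewrite Hu in Tu. rewrite Hv in Tv.
      set (A := x + y) in *. set (B := x - y) in *.
      assert (Tu' : Rabs A <= (beta * Rabs A + alpha * Rabs B)/2).
      { eapply Rle_trans; [exact Tu|].
        replace ((beta * A + alpha * B) / 2) with ((beta * A) / 2 + (alpha * B)/2) by field.
        eapply Rle_trans; [apply Rabs_triang|].
        rewrite !Rabs_div, !Rabs_mult, (Rabs_pos_eq 2), (Rabs_pos_eq alpha), (Rabs_pos_eq beta) by lra.
        lra. }
      assert (Tv' : Rabs B <= (alpha * Rabs A + beta * Rabs B)/2).
      { eapply Rle_trans; [exact Tv|].
        replace ((alpha * A + beta * B) / 2) with ((alpha * A) / 2 + (beta * B)/2) by field.
        eapply Rle_trans; [apply Rabs_triang|].
        rewrite !Rabs_div, !Rabs_mult, (Rabs_pos_eq 2), (Rabs_pos_eq alpha), (Rabs_pos_eq beta) by lra.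
        lra. }
      pose proof (Rabs_pos A). pose proof (Rabs_pos B).
      assert (Rabs A + Rabs B <= 0) by nra.
      assert (A = 0) by (apply Rabs_eq_0; lra).
      assert (B = 0) by (apply Rabs_eq_0; lra).
      unfold A, B in *. lra.
    + intros [-> ->]. split.
      * pose proof (derx alpha beta 0 0) as D.
        unfold T in D. replace (((alpha + beta) * 0 + (beta - alpha) * 0) / 2) with 0 in D by field.
        replace (((alpha + beta) * 0 - (beta - alpha) * 0) / 2) with 0 in D by field.
        rewrite sinh_0 in D. replace ((alpha + beta) / 4 * (2 * 0 - 0 / cosh 0 - 0 / cosh 0)) with 0 in D
          by (rewrite cosh_0; field). exact D.
      * pose proof (dery alpha beta 0 0) as D.
        unfold T in D. replace (((alpha + beta) * 0 + (beta - alpha) * 0) / 2) with 0 in D by field.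
        replace (((alpha + beta) * 0 - (beta - alpha) * 0) / 2) with 0 in D by field.
        rewrite sinh_0 in D. replace ((beta - alpha) / 4 * (2 * 0 - 0 / cosh 0 + 0 / cosh 0)) with 0 in D
          by (rewrite cosh_0; field). exact D.
  - intros r Hr.
    set (c1 := alpha + beta). set (c2 := beta - alpha).
    set (k := Rmin (c1 * (2 - c1)) (c2 * (2 - c2)) / 8).
    assert (Hk : 0 < k).
    { unfold k, Rmin. destruct Rle_dec; unfold c1, c2; nra. }
    exists (k * r ^ 2). split; [apply Rmult_lt_0_compat; [lra| apply pow_lt; lra]|].
    intros x y Hxy.
    assert (Hr2 : r ^ 2 <= x ^ 2 + y ^ 2).
    { assert (Hs : sqrt (x^2+y^2) * sqrt (x^2+y^2) = x^2+y^2) by (apply sqrt_sqrt; nra).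
      pose proof (sqrt_pos (x^2+y^2)). nra. }
    pose proof (lncosh_le ((c1 * x + c2 * y) / 2)).
    pose proof (lncosh_le ((c1 * x - c2 * y) / 2)).
    assert (k <= c1 * (2 - c1) / 8) by (unfold k; pose proof (Rmin_l (c1 * (2 - c1)) (c2 * (2 - c2))); lra).
    assert (k <= c2 * (2 - c2) / 8) by (unfold k; pose proof (Rmin_r (c1 * (2 - c1)) (c2 * (2 - c2))); lra).
    unfold Phi. fold c1 c2.
    assert (k * r^2 <= k * (x^2+y^2)) by nra.
    nra.
Qed.
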